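(* Let $G$ be a number all of whose options are numbers. Then $G\mathbin{:}1\triangleq\{G\mid R(G)\}$ and $G\mathbin{:}(-1)\triangleq\{L(G)\mid G\}$, where $1\cong\{0\mid\ \}$ and $-1\cong\{\ \mid 0\}$ with $0\cong\{\ \mid\ \}$.
   Context: Games are short normal-play combinatorial games, written $G\cong\{L(G)\mid R(G)\}$ ($\cong$ = identical literal forms). Disjunctive sum $G+H\cong\{L(G)+H,G+L(H)\mid R(G)+H,G+R(H)\}$, negation $-G\cong\{-R(G)\mid -L(G)\}$. Ordinal sum: $G\mathbin{:}H\cong\{L(G),\,G\mathbin{:}L(H)\mid R(G),\,G\mathbin{:}R(H)\}$. A number is a game $G$ with $G^L<G<G^R$ for all options. Equivalence modulo domination: $G\triangleq H$ means that in $G+(-H)$, for every move by either player as first player in one summand, the other player has a response in the other summand after which the responder wins. *)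

(* Defs.v *)
From Stdlib Require Import List Bool.
Import ListNotations.

(* A (literal form of a) short game {L(G) | R(G)}; equality (=) on this type
   is identity of literal forms (the paper's ≅). *)
Inductive game : Type := Game : list game -> list game -> game.

Definition Lopts (g : game) : list game := match g with Game l _ => l end.
Definition Ropts (g : game) : list game := match g with Game _ r => r end.

Definition zero : game := Game [] [].
Definition one : game := Game [zero] [].
Definition mone : game := Game [] [zero].

Fixpoint neg (g : game) : game :=
  match g with Game l r => Game (map neg r) (map neg l) end.

(* disjunctive sum  G+H = {L(G)+H, G+L(H) | R(G)+H, G+R(H)} *)
Fixpoint add (g h : game) {struct g} : game :=
  match g with
  | Game gl gr =>
      (fix addg (h : game) : game :=
         match h with
         | Game hl hr =>
             Game (map (fun x => add x h) gl ++ map addg hl)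
                  (map (fun x => add x h) gr ++ map addg hr)
         end) h
  end.

Fixpoint ord (g h : game) {struct h} : game :=
  match h with
  | Game hl hr => Game (Lopts g ++ map (ord g) hl) (Ropts g ++ map (ord g) hr)
  end.

(* The usual order of games (normal play):
   G <= H  iff  no G^L with H <= G^L  and no H^R with H^R <= G.
   cmp g = (fun h => g <= h, fun h => h <= g). *)
Fixpoint cmp (g : game) : (game -> bool) * (game -> bool) :=
  match g with
  | Game gl gr =>
      let leg :=
        fix leg (h : game) : bool :=
          match h with
          | Game hl hr =>
              forallb (fun x => negb (snd (cmp x) h)) gl &&
              forallb (fun y => negb (geg y)) hr
          end
        with geg (h : game) : bool :=
          match h with
          | Game hl hr =>
              forallb (fun y => negb (leg y)) hl &&
              forallb (fun x => negb (fst (cmp x) h)) gr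
          end
        for leg in
      let geg :=
        fix leg (h : game) : bool :=
          match h with
          | Game hl hr =>
              forallb (fun x => negb (snd (cmp x) h)) gl &&
              forallb (fun y => negb (geg y)) hr
          end
        with geg (h : game) : bool :=
          match h with
          | Game hl hr =>
              forallb (fun y => negb (leg y)) hl &&
              forallb (fun x => negb (fst (cmp x) h)) gr
          end
        for geg in
      (leg, geg)
  end.

Definition game_le (g h : game) : bool := fst (cmp g) h.
Definition game_lt (g h : game) : bool := game_le g h && negb (game_le h g).

Definition is_number (g : game) : Prop :=
  (forall x, In x (Lopts g) -> game_lt x g = true) /\
  (forall y, In y (Ropts g) -> game_lt g y = true).

(* "Right wins moving second in X" is X <= 0; "Left wins moving second" is 0 <= X. *)

(* Equivalence modulo domination  G ≜ H : in G + (-H), for every move by either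
   player as first player in one summand, the other player has a response in the
   other summand after which the responder wins. *)
Definition dom_equiv (g h : game) : Prop :=
  (* Left moves in G to G^L + (-H); Right answers in -H *)
  (forall gl, In gl (Lopts g) ->
     exists z, In z (Ropts (neg h)) /\ game_le (add gl z) zero = true) /\
  (* Left moves in -H to G + z; Right answers in G *)
  (forall z, In z (Lopts (neg h)) ->
     exists gr, In gr (Ropts g) /\ game_le (add gr z) zero = true) /\
  (* Right moves in G to G^R + (-H); Left answers in -H *)
  (forall gr, In gr (Ropts g) ->
     exists z, In z (Lopts (neg h)) /\ game_le zero (add gr z) = true) /\
  (* Right moves in -H to G + z; Left answers in G *)
  (forall z, In z (Ropts (neg h)) ->
     exists gl, In gl (Lopts g) /\ game_le zero (add gl z) = true).

(* Main.v *)
Require Import Defs.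
From Stdlib Require Import List Bool Lia.
Import ListNotations.

Definition ge (g h : game) : bool := snd (cmp g) h.

Lemma le_unfold gl gr hl hr :
  game_le (Game gl gr) (Game hl hr) =
  forallb (fun x => negb (ge x (Game hl hr))) gl &&
  forallb (fun y => negb (ge (Game gl gr) y)) hr.
Proof. reflexivity. Qed.

Lemma ge_unfold gl gr hl hr :
  ge (Game gl gr) (Game hl hr) =
  forallb (fun y => negb (game_le (Game gl gr) y)) hl &&
  forallb (fun x => negb (game_le x (Game hl hr))) gr.
Proof. reflexivity. Qed.

Lemma add_unfold gl gr hl hr :
  add (Game gl gr) (Game hl hr) =
  Game (map (fun x => add x (Game hl hr)) gl ++ map (add (Game gl gr)) hl)
       (map (fun x => add x (Game hl hr)) gr ++ map (add (Game gl gr)) hr).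
Proof. reflexivity. Qed.

Fixpoint gsize (g : game) : nat :=
  match g with Game l r => S (list_sum (map gsize l) + list_sum (map gsize r)) end.

Lemma in_sum_le l x : In x l -> gsize x <= list_sum (map gsize l).
Proof.
  induction l as [|a l IH]; simpl; [tauto|].
  intros [->|H]; [lia|]. specialize (IH H); lia.
Qed.

Lemma size_L l r x : In x l -> gsize x < gsize (Game l r).
Proof. intros H; apply in_sum_le in H; simpl; lia. Qed.
Lemma size_R l r x : In x r -> gsize x < gsize (Game l r).
Proof. intros H; apply in_sum_le in H; simpl; lia. Qed.

Lemma forallb_ext_in {A} (f g : A -> bool) l :
  (forall a, In a l -> f a = g a) -> forallb f l = forallb g l.
Proof.
  induction l as [|a l IH]; simpl; intros H; auto.
  rewrite H by auto. rewrite IH; auto.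
Qed.

Lemma ge_le_n n : forall g h, gsize g + gsize h < n -> ge g h = game_le h g.
Proof.
  induction n; intros [gl gr] [hl hr] Hs; [lia|].
  rewrite ge_unfold, le_unfold. f_equal.
  - apply forallb_ext_in; intros a Ha. f_equal.
    apply eq_sym, IHn. pose proof (size_L hl hr a Ha). lia.
  - apply forallb_ext_in; intros a Ha. f_equal.
    apply eq_sym, IHn. pose proof (size_R gl gr a Ha). lia.
Qed.

Lemma ge_le g h : ge g h = game_le h g.
Proof. apply (ge_le_n (S (gsize g + gsize h))); lia. Qed.

Lemma le_unfold' gl gr hl hr :
  game_le (Game gl gr) (Game hl hr) =
  forallb (fun x => negb (game_le (Game hl hr) x)) gl &&
  forallb (fun y => negb (game_le y (Game gl gr))) hr.
Proof.
  rewrite le_unfold. f_equal; apply forallb_ext_in; intros; rewrite ge_le; auto.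
Qed.

Lemma le_refl g : game_le g g = true.
Proof.
  remember (S (gsize g)) as n. assert (Hs : gsize g < n) by lia. clear Heqn.
  revert g Hs. induction n; intros [l r] Hs; [lia|].
  rewrite le_unfold'. apply andb_true_intro; split; apply forallb_forall;
    intros a Ha; apply negb_true_iff.
  - destruct a as [al ar]. rewrite le_unfold'.
    apply andb_false_intro1. apply not_true_iff_false. intro H.
    rewrite forallb_forall in H. specialize (H _ Ha).
    rewrite IHn in H; [discriminate H|]. pose proof (size_L l r _ Ha). lia.
  - destruct a as [al ar]. rewrite le_unfold'.
    apply andb_false_intro2. apply not_true_iff_false. intro H.
    rewrite forallb_forall in H. specialize (H _ Ha).
    rewrite IHn in H; [discriminate H|]. pose proof (size_R l r _ Ha). lia.
Qed.

Lemma forallb_map' {A B} (f : B -> bool) (g : A -> B) l :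
  forallb f (map g l) = forallb (fun x => f (g x)) l.
Proof. induction l; simpl; congruence. Qed.

Lemma forallb_nil {A} (f : A -> bool) : forallb f [] = true.
Proof. reflexivity. Qed.

Lemma Q_n n : forall x y, gsize x + gsize y < n ->
  game_le x y = game_le (add x (neg y)) zero /\
  game_le y x = game_le zero (add x (neg y)).
Proof.
  induction n; intros [xl xr] [yl yr] Hs; [lia|].
  change (neg (Game yl yr)) with (Game (map neg yr) (map neg yl)).
  rewrite add_unfold. unfold zero. rewrite !le_unfold', !forallb_nil, ?andb_true_l.
  rewrite !andb_true_r, !forallb_app, !forallb_map'.
  split; [|rewrite (andb_comm (forallb _ yl))];
  f_equal; apply forallb_ext_in; intros a Ha; f_equal.
 all: first [pose proof (size_L xl xr a Ha) | pose proof (size_R xl xr a Ha)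
            | pose proof (size_L yl yr a Ha) | pose proof (size_R yl yr a Ha)].
  all: first [ apply (proj1 (IHn a (Game yl yr) ltac:(lia))) | apply (proj2 (IHn a (Game yl yr) ltac:(lia)))
        | apply (proj1 (IHn (Game xl xr) a ltac:(lia))) | apply (proj2 (IHn (Game xl xr) a ltac:(lia))) ].
Qed.

Lemma Q x y :
  game_le x y = game_le (add x (neg y)) zero /\
  game_le y x = game_le zero (add x (neg y)).
Proof. apply (Q_n (S (gsize x + gsize y))); lia. Qed.

Lemma le_sub x y : game_le x y = true -> game_le (add x (neg y)) zero = true.
Proof. intros H; rewrite <- (proj1 (Q x y)); auto. Qed.
Lemma ge_sub x y : game_le y x = true -> game_le zero (add x (neg y)) = true.
Proof. intros H; rewrite <- (proj2 (Q x y)); auto. Qed.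
Lemma lt_le x y : game_lt x y = true -> game_le x y = true.
Proof. unfold game_lt; intros H; apply andb_true_iff in H; tauto. Qed.

Theorem corollary2p7 (G : game) :
  is_number G ->
  (forall x, In x (Lopts G) -> is_number x) ->
  (forall y, In y (Ropts G) -> is_number y) ->
  dom_equiv (ord G one) (Game [G] (Ropts G)) /\
  dom_equiv (ord G mone) (Game (Lopts G) [G]).
Proof.
  intros [HL HR] _ _. destruct G as [l r]. simpl in HL, HR.
  unfold one, mone, dom_equiv; cbn [ord Lopts Ropts map]; rewrite !app_nil_r.
  assert (E : ord (Game l r) zero = Game l r) by (simpl; rewrite !app_nil_r; auto).
  rewrite E. set (G := Game l r).
  split; repeat split.
  - intros gl Hgl. exists (neg G). split; [left; auto|].
    apply in_app_or in Hgl as [Hgl|[<-|[]]].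
    + apply (le_sub gl G), lt_le, HL; auto.
    + apply (le_sub G G), le_refl.
  - intros z Hz. apply in_map_iff in Hz as [y [<- Hy]].
    exists y; split; auto. apply (le_sub y y), le_refl.
  - intros gr Hgr. exists (neg gr). split; [apply in_map; auto|].
    apply (ge_sub gr gr), le_refl.
  - intros z [<-|[]]. exists G. split; [apply in_or_app; right; left; auto|].
    apply (ge_sub G G), le_refl.
  - intros gl Hgl. exists (neg gl). split; [apply in_map; auto|].
    apply (le_sub gl gl), le_refl.
  - intros z [<-|[]]. exists G. split; [apply in_or_app; right; left; auto|].
    apply (le_sub G G), le_refl.
  - intros gr Hgr. exists (neg G). split; [left; auto|].
    apply in_app_or in Hgr as [Hgr|[<-|[]]].
    + apply (ge_sub gr G), lt_le, HR; auto.
    + apply (ge_sub G G), le_refl.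
  - intros z Hz. apply in_map_iff in Hz as [y [<- Hy]].
    exists y; split; auto. apply (ge_sub y y), le_refl.
Qed.
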